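(* Let $\alpha$ be a Riemannian metric and $\beta$ a 1-form on a manifold, and let $k_1,k_2,k_3$ be constants with $1+(k_1+k_3)t+k_2t^2>0$ for $0\le t\le b^2$. Suppose $$b_{i|j}=2\tau\{(1+k_1b^2)a_{ij}+(k_2b^2+k_3)b_ib_j\}$$ for a scalar function $\tau$. Let $c=c(b^2)=\exp\big(\int_0^{b^2}\frac12\frac{k_3+k_2t}{1+(k_1+k_3)t+k_2t^2}dt\big)$ and $\tilde\beta=\beta/c$. Then the covariant derivative of $\tilde\beta$ with respect to $\alpha$ satisfies $$\tilde b_{i|j}=\frac{2\tau(1+k_1b^2)}{c}\,a_{ij};$$ in particular $\tilde\beta$ is closed and conformal with respect to $\alpha$.
   Context: For $\alpha=\sqrt{a_{ij}y^iy^j}$ and $\beta=b_iy^i$: $b=\|\beta\|_\alpha=\sqrt{a^{ij}b_ib_j}$, and $b_{i|j}$ denotes the covariant derivative of $\beta$ with respect to the Levi-Civita connection of $\alpha$. A 1-form is closed if its covariant derivative is symmetric. *)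

(* Defs.v *)
From Stdlib Require Import Reals Lra ClassicalEpsilon.
Open Scope R_scope.

(* Points of R^n are represented as functions nat -> R (only coordinates < n matter). *)
Definition pt := nat -> R.

Fixpoint sumn (n : nat) (f : nat -> R) : R :=
  match n with O => 0 | S m => sumn m f + f m end.

Definition kdelta (i j : nat) : R := if Nat.eqb i j then 1 else 0.

Definition shift (x : pt) (j : nat) (t : R) : pt :=
  fun k => if Nat.eqb k j then x k + t else x k.

Definition has_partial (f : pt -> R) (j : nat) (x : pt) (l : R) : Prop :=
  derivable_pt_lim (fun t => f (shift x j t)) 0 l.

(* the partial derivative d_j f (x) (meaningful when it exists; it is then unique) *)
Definition pd (f : pt -> R) (j : nat) (x : pt) : R :=
  epsilon (inhabits 0) (fun l => has_partial f j x l).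

Definition open_in (n : nat) (U : pt -> Prop) : Prop :=
  forall x, U x -> exists eps, 0 < eps /\
    forall y, (forall k, (k < n)%nat -> Rabs (y k - x k) < eps) -> U y.

(* Riemann integral  int_a^b f  (meaningful when f is Riemann integrable) *)
Definition Rint (f : R -> R) (a b : R) : R :=
  epsilon (inhabits 0) (fun I => exists pr : Riemann_integrable f a b, RiemannInt pr = I).

Definition riemannian_metric (n : nat) (U : pt -> Prop)
    (a ainv : nat -> nat -> pt -> R) : Prop :=
  forall x, U x ->
    (forall i j, (i < n)%nat -> (j < n)%nat -> a i j x = a j i x) /\
    (forall i j, (i < n)%nat -> (j < n)%nat ->
        sumn n (fun k => ainv i k x * a k j x) = kdelta i j) /\
    (forall v : nat -> R, (exists k, (k < n)%nat /\ v k <> 0) ->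
        0 < sumn n (fun i => sumn n (fun j => a i j x * v i * v j))).

Definition christoffel (n : nat) (a ainv : nat -> nat -> pt -> R)
    (k i j : nat) (x : pt) : R :=
  / 2 * sumn n (fun l => ainv k l x *
      (pd (a l j) i x + pd (a l i) j x - pd (a i j) l x)).

Definition covd (n : nat) (a ainv : nat -> nat -> pt -> R) (b : nat -> pt -> R)
    (i j : nat) (x : pt) : R :=
  pd (b i) j x - sumn n (fun k => christoffel n a ainv k i j x * b k x).

Definition bsq (n : nat) (ainv : nat -> nat -> pt -> R) (b : nat -> pt -> R) (x : pt) : R :=
  sumn n (fun i => sumn n (fun j => ainv i j x * b i x * b j x)).

Definition cfun (k1 k2 k3 s : R) : R :=
  exp (Rint (fun t => / 2 * ((k3 + k2 * t) / (1 + (k1 + k3) * t + k2 * t ^ 2))) 0 s).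

(* Main.v *)
Require Import Defs.
From Stdlib Require Import Reals Lra Lia ClassicalEpsilon FunctionalExtensionality Classical.
From Coquelicot Require Import Coquelicot.
Open Scope R_scope.
Lemma cont_pos (f : R -> R) x0 : continuity_pt f x0 -> 0 < f x0 ->
  exists alp, 0 < alp /\ forall t, Rabs (t - x0) < alp -> 0 < f t.
Proof.
  intros Hc Hp. destruct (Hc (f x0) Hp) as [alp [Ha H]].
  exists alp; split; auto. intros t Ht.
  destruct (Req_dec t x0) as [->|Hne]; auto.
  assert (Hd := H t (conj (conj I (not_eq_sym Hne)) Ht)).
  unfold R_dist in Hd; simpl in Hd. unfold R_dist in Hd.
  apply Rabs_def2 in Hd. lra.
Qed.

Definition Dq k1 k2 k3 (t:R) := 1 + (k1 + k3) * t + k2 * t ^ 2.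
Definition gq k1 k2 k3 (t:R) := / 2 * ((k3 + k2 * t) / (1 + (k1 + k3) * t + k2 * t ^ 2)).

Lemma Dq_cont k1 k2 k3 x : continuity_pt (Dq k1 k2 k3) x.
Proof. unfold Dq. reg. Qed.

Lemma Rint_RInt f s pr : Rint f 0 s = RiemannInt (f:=f) (a:=0) (b:=s) pr.
Proof.
  unfold Rint. destruct (@epsilon_spec R (inhabits 0) (fun I => exists pr : Riemann_integrable f 0 s, RiemannInt pr = I)) as [pr' H].
  - exists (RiemannInt pr); eauto.
  - rewrite <- H. apply RiemannInt_P5.
Qed.

Lemma cfun_deriv k1 k2 k3 s0 : 0 <= s0 ->
  (forall t, 0 <= t <= s0 -> 0 < Dq k1 k2 k3 t) ->
  derivable_pt_lim (cfun k1 k2 k3) s0 (cfun k1 k2 k3 s0 * gq k1 k2 k3 s0).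
Proof.
  intros Hs Hp.
  destruct (cont_pos _ 0 (Dq_cont k1 k2 k3 0)) as [a0 [Ha0 H0]].
  { unfold Dq; simpl; lra. }
  destruct (cont_pos _ s0 (Dq_cont k1 k2 k3 s0)) as [a1 [Ha1 H1]].
  { apply Hp; lra. }
  assert (HI : forall t, -a0 < t < s0 + a1 -> 0 < Dq k1 k2 k3 t).
  { intros t Ht. destruct (Rlt_le_dec t 0).
    - apply H0. rewrite Rminus_0_r, Rabs_left; lra.
    - destruct (Rle_lt_dec t s0). apply Hp; lra.
      apply H1. rewrite Rabs_right; lra. }
  assert (Hg : forall t, -a0 < t < s0 + a1 -> continuous (gq k1 k2 k3) t).
  { intros t Ht. apply continuity_pt_filterlim. unfold gq.
    specialize (HI t Ht). unfold Dq in HI. reg. lra. }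
  assert (Hex : forall s, -a0 < s < s0 + a1 -> ex_RInt (gq k1 k2 k3) 0 s).
  { intros s Hs'. apply (@ex_RInt_continuous R_CompleteNormedModule). intros z Hz. apply Hg.
    unfold Rmin, Rmax in Hz. destruct (Rle_dec 0 s); lra. }
  assert (Heq : forall s, -a0 < s < s0 + a1 -> exp (RInt (gq k1 k2 k3) 0 s) = cfun k1 k2 k3 s).
  { intros s Hs'. unfold cfun. f_equal.
    rewrite (RInt_Reals _ _ _ (ex_RInt_Reals_0 _ _ _ (Hex s Hs'))).
    symmetry. apply (Rint_RInt (gq k1 k2 k3)). }
  apply is_derive_Reals.
  apply (is_derive_ext_loc (fun s => exp (RInt (gq k1 k2 k3) 0 s))).
  { apply (locally_interval _ s0 (-a0) (s0+a1)); simpl; try lra.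
    intros y Hy1 Hy2. apply Heq; lra. }
  rewrite <- (Heq s0) by lra.
  apply is_derive_Reals.
  apply (derivable_pt_lim_comp (fun s => RInt (gq k1 k2 k3) 0 s) exp s0 (gq k1 k2 k3 s0) _).
  - apply is_derive_Reals. apply (is_derive_RInt (gq k1 k2 k3) (fun s => RInt (gq k1 k2 k3) 0 s) 0 s0).
    + apply (locally_interval _ s0 (-a0) (s0+a1)); simpl; try lra.
      intros y Hy1 Hy2. apply (@RInt_correct R_CompleteNormedModule). apply Hex; lra.
    + apply Hg; lra.
  - apply derivable_pt_lim_exp.
Qed.

Lemma sumn_ext n f g : (forall k, (k < n)%nat -> f k = g k) -> sumn n f = sumn n g.
Proof. induction n; simpl; intros H; auto. rewrite IHn by (intros; apply H; lia). rewrite H by lia. auto. Qed.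
Lemma sumn_add n f g : sumn n (fun k => f k + g k) = sumn n f + sumn n g.
Proof. induction n; simpl; [ring|rewrite IHn; ring]. Qed.
Lemma sumn_sub n f g : sumn n (fun k => f k - g k) = sumn n f - sumn n g.
Proof. induction n; simpl; [ring|rewrite IHn; ring]. Qed.
Lemma sumn_opp n f : sumn n (fun k => - f k) = - sumn n f.
Proof. induction n; simpl; [ring|rewrite IHn; ring]. Qed.
Lemma sumn_scal n c f : sumn n (fun k => c * f k) = c * sumn n f.
Proof. induction n; simpl; [ring|rewrite IHn; ring]. Qed.
Lemma sumn_scalr n c f : sumn n (fun k => f k * c) = sumn n f * c.
Proof. induction n; simpl; [ring|rewrite IHn; ring]. Qed.
Lemma sumn_zero n f : (forall k, (k < n)%nat -> f k = 0) -> sumn n f = 0.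
Proof. intros H. rewrite (sumn_ext n f (fun _ => 0)) by auto. clear H. induction n; simpl; auto. rewrite IHn; ring. Qed.
Lemma sumn_swap n m f : sumn n (fun i => sumn m (fun j => f i j)) = sumn m (fun j => sumn n (fun i => f i j)).
Proof. induction n; simpl. - symmetry; apply sumn_zero; auto. - rewrite IHn, <- sumn_add. auto. Qed.
Lemma sumn_delta n i f : (i < n)%nat -> sumn n (fun k => kdelta i k * f k) = f i.
Proof.
  induction n; intros Hi; simpl; [lia|].
  destruct (Nat.eq_dec i n) as [->|Hne].
  - rewrite sumn_zero. unfold kdelta; rewrite Nat.eqb_refl; ring.
    intros k Hk. unfold kdelta. destruct (Nat.eqb_spec n k); [lia|ring].
  - rewrite IHn by lia. unfold kdelta. destruct (Nat.eqb_spec i n); [lia|ring].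
Qed.
Lemma kdelta_sym i j : kdelta i j = kdelta j i.
Proof. unfold kdelta. destruct (Nat.eqb_spec i j), (Nat.eqb_spec j i); auto; lia. Qed.
Lemma sumn_delta' n i f : (i < n)%nat -> sumn n (fun k => f k * kdelta k i) = f i.
Proof. intros. rewrite <- (sumn_delta n i f) by auto. apply sumn_ext; intros. rewrite kdelta_sym; ring. Qed.

Lemma deriv_sumn n (F : nat -> R -> R) (D : nat -> R) x :
  (forall k, (k < n)%nat -> derivable_pt_lim (F k) x (D k)) ->
  derivable_pt_lim (fun t => sumn n (fun k => F k t)) x (sumn n D).
Proof.
  induction n; intros H; simpl.
  - apply derivable_pt_lim_const.
  - apply (derivable_pt_lim_plus (fun t => sumn n (fun k => F k t)) (F n)).
    apply IHn; intros; apply H; lia. apply H; lia.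
Qed.

Lemma shift0 x j : shift x j 0 = x.
Proof. apply functional_extensionality; intros k; unfold shift. destruct (k =? j)%nat; ring. Qed.

Lemma pd_eq f j x l : has_partial f j x l -> pd f j x = l.
Proof.
  intros H. unfold pd.
  pose proof (@epsilon_spec R (inhabits 0) (fun l => has_partial f j x l) (ex_intro _ l H)) as H2.
  exact (uniqueness_limite _ _ _ _ H2 H).
Qed.

Lemma deriv_loc_const (f : R -> R) c eps l : 0 < eps -> (forall t, Rabs t < eps -> f t = c) ->
  derivable_pt_lim f 0 l -> l = 0.
Proof.
  intros He Hc Hd. apply (uniqueness_limite f 0); auto.
  intros e He'. exists (mkposreal eps He). intros h Hh0 Hh. simpl in Hh.
  rewrite Rplus_0_l, Hc by auto. rewrite Hc by (rewrite Rabs_R0; auto).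
  replace ((c - c) / h - 0) with 0 by (field; auto). rewrite Rabs_R0. auto.
Qed.
Lemma Gsym n (A G : nat -> nat -> R)
  (Asym : forall i j, (i < n)%nat -> (j < n)%nat -> A i j = A j i)
  (GA : forall i j, (i < n)%nat -> (j < n)%nat -> sumn n (fun k => G i k * A k j) = kdelta i j) :
  forall i j, (i < n)%nat -> (j < n)%nat -> G i j = G j i.
Proof.
  intros i j Hi Hj.
  transitivity (sumn n (fun m => G i m * kdelta m j)). rewrite sumn_delta'; auto.
  transitivity (sumn n (fun m => sumn n (fun k => G j k * (G i m * A m k)))).
  { apply sumn_ext; intros m Hm. rewrite kdelta_sym, <- (GA j m) by auto.
    rewrite <- sumn_scal. apply sumn_ext; intros k Hk. rewrite (Asym k m) by auto; ring. }
  rewrite sumn_swap. transitivity (sumn n (fun k => kdelta i k * G j k)).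
  { apply sumn_ext; intros k Hk. rewrite sumn_scal, GA by auto; ring. }
  apply sumn_delta; auto.
Qed.

Lemma AG n (A G : nat -> nat -> R)
  (Asym : forall i j, (i < n)%nat -> (j < n)%nat -> A i j = A j i)
  (GA : forall i j, (i < n)%nat -> (j < n)%nat -> sumn n (fun k => G i k * A k j) = kdelta i j) :
  forall i j, (i < n)%nat -> (j < n)%nat -> sumn n (fun k => A i k * G k j) = kdelta i j.
Proof.
  intros i j Hi Hj. rewrite kdelta_sym, <- GA by auto. apply sumn_ext; intros k Hk.
  rewrite (Asym i k), (Gsym n A G Asym GA k j) by auto. ring.
Qed.

Lemma bsq_nonneg n (A G : nat -> nat -> R) (B : nat -> R)
  (Asym : forall i j, (i < n)%nat -> (j < n)%nat -> A i j = A j i)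
  (GA : forall i j, (i < n)%nat -> (j < n)%nat -> sumn n (fun k => G i k * A k j) = kdelta i j)
  (Apos : forall v : nat -> R, (exists k, (k < n)%nat /\ v k <> 0) ->
        0 < sumn n (fun i => sumn n (fun j => A i j * v i * v j))) :
  0 <= sumn n (fun i => sumn n (fun j => G i j * B i * B j)).
Proof.
  set (u := fun k => sumn n (fun l => G k l * B l)).
  assert (Hq : sumn n (fun i => sumn n (fun j => A i j * u i * u j)) =
               sumn n (fun i => sumn n (fun j => G i j * B i * B j))).
  { transitivity (sumn n (fun i => u i * B i)).
    - apply sumn_ext; intros i Hi.
      transitivity (u i * sumn n (fun j => A i j * u j)).
      { rewrite <- sumn_scal; apply sumn_ext; intros; ring. }
      f_equal. unfold u.
      transitivity (sumn n (fun j => sumn n (fun l => A i j * G j l * B l))).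
      { apply sumn_ext; intros j Hj. rewrite <- sumn_scal. apply sumn_ext; intros; ring. }
      rewrite sumn_swap. transitivity (sumn n (fun l => kdelta i l * B l)).
      { apply sumn_ext; intros l Hl. rewrite <- (AG n A G Asym GA i l) by auto.
        rewrite <- sumn_scalr. apply sumn_ext; intros; ring. }
      apply sumn_delta; auto.
    - apply sumn_ext; intros i Hi. unfold u. rewrite <- sumn_scalr. apply sumn_ext; intros; ring. }
  rewrite <- Hq.
  destruct (classic (exists k, (k < n)%nat /\ u k <> 0)) as [H|H].
  - left; apply Apos; auto.
  - right. symmetry. apply sumn_zero; intros i Hi. apply sumn_zero; intros j Hj.
    assert (u i = 0). { apply NNPP; intro; apply H; eauto. } rewrite H0; ring.
Qed.
Lemma core n (A G : nat -> nat -> R) (B : nat -> R) (Da Dg : nat -> nat -> nat -> R) (Db : nat -> nat -> R)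
  (Asym : forall i j, (i < n)%nat -> (j < n)%nat -> A i j = A j i)
  (GA : forall i j, (i < n)%nat -> (j < n)%nat -> sumn n (fun k => G i k * A k j) = kdelta i j)
  (dId : forall i q l, (i < n)%nat -> (q < n)%nat -> (l < n)%nat ->
     sumn n (fun k => Dg i k l * A k q + G i k * Da k q l) = 0)
  j (Hj : (j < n)%nat) :
  sumn n (fun i => sumn n (fun k => (Dg i k j * B i + G i k * Db i j) * B k + G i k * B i * Db k j))
  = 2 * sumn n (fun k => sumn n (fun l => G k l * B l) *
      (Db k j - sumn n (fun m => (/2 * sumn n (fun p => G m p * (Da p j k + Da p k j - Da k j p))) * B m))).
Proof.
  pose proof (Gsym n A G Asym GA) as GS.
  pose proof (AG n A G Asym GA) as HAG.
  set (u := fun k => sumn n (fun l => G k l * B l)).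
  assert (Hu : forall p, (p < n)%nat -> sumn n (fun m => B m * G m p) = u p).
  { intros p Hp. unfold u. apply sumn_ext; intros m Hm. rewrite GS by auto; ring. }
  assert (HB : forall k, (k < n)%nat -> sumn n (fun q => A k q * u q) = B k).
  { intros k Hk. unfold u.
    transitivity (sumn n (fun q => sumn n (fun l => A k q * G q l * B l))).
    { apply sumn_ext; intros q Hq. rewrite <- sumn_scal. apply sumn_ext; intros; ring. }
    rewrite sumn_swap. transitivity (sumn n (fun l => kdelta k l * B l)).
    { apply sumn_ext; intros l Hl. rewrite <- (HAG k l) by auto. rewrite <- sumn_scalr. apply sumn_ext; intros; ring. }
    apply sumn_delta; auto. }
  set (T1 := sumn n (fun i => sumn n (fun k => Dg i k j * B i * B k))).
  set (W := sumn n (fun k => u k * Db k j)).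
  set (X := sumn n (fun k => sumn n (fun p => u k * u p * Da p k j))).
  assert (S1 : sumn n (fun i => sumn n (fun k => (Dg i k j * B i + G i k * Db i j) * B k + G i k * B i * Db k j))
               = T1 + 2 * W).
  { transitivity (T1 + sumn n (fun i => sumn n (fun k => G i k * Db i j * B k))
                    + sumn n (fun i => sumn n (fun k => G i k * B i * Db k j))).
    { unfold T1. rewrite <- !sumn_add. apply sumn_ext; intros i Hi. rewrite <- !sumn_add.
      apply sumn_ext; intros; ring. }
    assert (E2 : sumn n (fun i => sumn n (fun k => G i k * Db i j * B k)) = W).
    { unfold W. apply sumn_ext; intros i Hi. unfold u. rewrite <- sumn_scalr. apply sumn_ext; intros; ring. }
    assert (E3 : sumn n (fun i => sumn n (fun k => G i k * B i * Db k j)) = W).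
    { rewrite sumn_swap. unfold W. apply sumn_ext; intros k Hk. rewrite <- Hu by auto.
      rewrite <- sumn_scalr. apply sumn_ext; intros; ring. }
    rewrite E2, E3; ring. }
  assert (S2 : sumn n (fun k => u k *
      sumn n (fun m => (/2 * sumn n (fun p => G m p * (Da p j k + Da p k j - Da k j p))) * B m))
      = / 2 * X).
  { transitivity (/2 * sumn n (fun k => sumn n (fun p => u k * u p * (Da p j k + Da p k j - Da k j p)))).
    { rewrite <- sumn_scal. apply sumn_ext; intros k Hk.
      transitivity (/2 * u k * sumn n (fun m => sumn n (fun p => B m * G m p * (Da p j k + Da p k j - Da k j p)))).
      { rewrite <- (sumn_scal n (/2 * u k)), <- (sumn_scal n (u k)). apply sumn_ext; intros m Hm.
        rewrite (sumn_ext n (fun p => B m * G m p * (Da p j k + Da p k j - Da k j p))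
           (fun p => B m * (G m p * (Da p j k + Da p k j - Da k j p)))) by (intros; ring).
        rewrite sumn_scal. ring. }
      rewrite sumn_swap.
      rewrite (sumn_ext n (fun p => sumn n (fun m => B m * G m p * (Da p j k + Da p k j - Da k j p)))
        (fun p => u p * (Da p j k + Da p k j - Da k j p))).
      2:{ intros p Hp. rewrite <- Hu by auto. rewrite <- sumn_scalr. reflexivity. }
      rewrite (sumn_ext n (fun p => u k * u p * (Da p j k + Da p k j - Da k j p))
        (fun p => u k * (u p * (Da p j k + Da p k j - Da k j p)))) by (intros; ring).
      rewrite sumn_scal. ring. }
    f_equal.
    transitivity (sumn n (fun k => sumn n (fun p => u k * u p * Da p j k))
                  + X - sumn n (fun k => sumn n (fun p => u k * u p * Da k j p))).
    { unfold X. rewrite <- sumn_add, <- sumn_sub. apply sumn_ext; intros k Hk.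
      rewrite <- sumn_add, <- sumn_sub. apply sumn_ext; intros; ring. }
    rewrite (sumn_swap n n (fun k p => u k * u p * Da k j p)).
    assert (sumn n (fun k => sumn n (fun p => u k * u p * Da p j k)) =
            sumn n (fun j0 => sumn n (fun i => u i * u j0 * Da i j j0))).
    { apply sumn_ext; intros; apply sumn_ext; intros; ring. }
    rewrite H; ring. }
  assert (S3 : T1 = - X).
  { transitivity (sumn n (fun i => B i * sumn n (fun q => u q * sumn n (fun k => Dg i k j * A k q)))).
    { unfold T1. apply sumn_ext; intros i Hi.
      transitivity (B i * sumn n (fun k => Dg i k j * sumn n (fun q => A k q * u q))).
      { rewrite <- sumn_scal. apply sumn_ext; intros k Hk. rewrite HB by auto; ring. }
      f_equal. transitivity (sumn n (fun k => sumn n (fun q => Dg i k j * A k q * u q))).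
      { apply sumn_ext; intros k Hk. rewrite <- sumn_scal. apply sumn_ext; intros; ring. }
      rewrite sumn_swap. apply sumn_ext; intros q Hq. rewrite <- sumn_scal. apply sumn_ext; intros; ring. }
    transitivity (sumn n (fun i => B i * sumn n (fun q => u q * - sumn n (fun k => G i k * Da k q j)))).
    { apply sumn_ext; intros i Hi. f_equal. apply sumn_ext; intros q Hq. f_equal.
      pose proof (dId i q j Hi Hq Hj) as D. rewrite sumn_add in D. lra. }
    transitivity (- sumn n (fun q => sumn n (fun k => u q * u k * Da k q j))).
    { transitivity (- sumn n (fun i => sumn n (fun q => sumn n (fun k => B i * G i k * u q * Da k q j)))).
      { rewrite <- sumn_opp. apply sumn_ext; intros i Hi.
        rewrite <- (sumn_opp n (fun q => sumn n (fun k => B i * G i k * u q * Da k q j))).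
        rewrite <- sumn_scal. apply sumn_ext; intros q Hq.
        rewrite <- (sumn_opp n (fun k => B i * G i k * u q * Da k q j)).
        rewrite (sumn_ext n (fun k => - (B i * G i k * u q * Da k q j)) (fun k => (-(B i * u q)) * (G i k * Da k q j))) by (intros; ring).
        rewrite sumn_scal. ring. }
      f_equal. rewrite sumn_swap. apply sumn_ext; intros q Hq. rewrite sumn_swap.
      apply sumn_ext; intros k Hk. rewrite <- (Hu k Hk).
      rewrite (sumn_ext n (fun i => B i * G i k * u q * Da k q j) (fun i => (B i * G i k) * (u q * Da k q j))) by (intros; ring).
      rewrite sumn_scalr. ring. }
    unfold X. apply f_equal. apply sumn_ext; intros; apply sumn_ext; intros; ring. }
  rewrite S1, S3.
  transitivity (2 * (W - sumn n (fun k => u k *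
      sumn n (fun m => (/2 * sumn n (fun p => G m p * (Da p j k + Da p k j - Da k j p))) * B m)))).
  2: { unfold W. rewrite <- sumn_sub. apply f_equal. apply sumn_ext; intros k Hk. unfold u. ring. }
  rewrite S2. field.
Qed.
Lemma hp_pd f l x : (exists d, has_partial f l x d) -> has_partial f l x (pd f l x).
Proof. intros [d H]. rewrite (pd_eq f l x d H). auto. Qed.

Lemma deriv_mult' (f g : R -> R) l1 l2 a0 b0 :
  derivable_pt_lim f 0 l1 -> derivable_pt_lim g 0 l2 -> f 0 = a0 -> g 0 = b0 ->
  derivable_pt_lim (fun t => f t * g t) 0 (l1 * b0 + a0 * l2).
Proof. intros H1 H2 <- <-. exact (derivable_pt_lim_mult f g 0 l1 l2 H1 H2). Qed.

Lemma deriv_div' (f g : R -> R) l1 l2 a0 b0 :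
  derivable_pt_lim f 0 l1 -> derivable_pt_lim g 0 l2 -> f 0 = a0 -> g 0 = b0 -> b0 <> 0 ->
  derivable_pt_lim (fun t => f t / g t) 0 ((l1 * b0 - l2 * a0) / b0²).
Proof. intros H1 H2 <- <- H. exact (derivable_pt_lim_div f g 0 l1 l2 H1 H2 H). Qed.

Lemma deriv_comp' (f1 f2 : R -> R) l1 l2 y :
  derivable_pt_lim f1 0 l1 -> f1 0 = y -> derivable_pt_lim f2 y l2 ->
  derivable_pt_lim (fun t => f2 (f1 t)) 0 (l2 * l1).
Proof. intros H1 <- H2. exact (derivable_pt_lim_comp f1 f2 0 l1 l2 H1 H2). Qed.

Lemma shift_near n (U : pt -> Prop) x l : open_in n U -> U x ->
  exists eps, 0 < eps /\ forall t, Rabs t < eps -> U (shift x l t).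
Proof.
  intros HU Hx. destruct (HU x Hx) as [eps [He H]]. exists eps; split; auto.
  intros t Ht. apply H. intros k Hk. unfold shift. destruct (k =? l)%nat.
  - replace (x k + t - x k) with t by ring. auto.
  - replace (x k - x k) with 0 by ring. rewrite Rabs_R0; auto.
Qed.

Theorem mainTheorem16
  (n : nat) (U : pt -> Prop) (a ainv : nat -> nat -> pt -> R)
  (b : nat -> pt -> R) (tau : pt -> R) (k1 k2 k3 : R)
  (HU : open_in n U)
  (Ha : riemannian_metric n U a ainv)
  (Hda : forall i j l x, (i < n)%nat -> (j < n)%nat -> (l < n)%nat -> U x ->
           exists d, has_partial (a i j) l x d)
  (Hdainv : forall i j l x, (i < n)%nat -> (j < n)%nat -> (l < n)%nat -> U x ->
           exists d, has_partial (ainv i j) l x d)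
  (Hdb : forall i l x, (i < n)%nat -> (l < n)%nat -> U x ->
           exists d, has_partial (b i) l x d)
  (Hpos : forall x t, U x -> 0 <= t <= bsq n ainv b x ->
           0 < 1 + (k1 + k3) * t + k2 * t ^ 2)
  (Hb : forall x i j, U x -> (i < n)%nat -> (j < n)%nat ->
           covd n a ainv b i j x =
           2 * tau x * ((1 + k1 * bsq n ainv b x) * a i j x
                        + (k2 * bsq n ainv b x + k3) * b i x * b j x)) :
  let btil := fun i y => b i y / cfun k1 k2 k3 (bsq n ainv b y) in
  forall x, U x ->
    (forall i j, (i < n)%nat -> (j < n)%nat ->
       covd n a ainv btil i j x =
       2 * tau x * (1 + k1 * bsq n ainv b x) / cfun k1 k2 k3 (bsq n ainv b x) * a i j x) /\
    (forall i j, (i < n)%nat -> (j < n)%nat ->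
       covd n a ainv btil i j x = covd n a ainv btil j i x).
Proof.
  intros btil x Hx.
  destruct (Ha x Hx) as [Asym [GA Apos]].
  set (s := bsq n ainv b x).
  set (c := cfun k1 k2 k3 s).
  set (u := fun k => sumn n (fun l => ainv k l x * b l x)).
  pose proof (Gsym n (fun i j => a i j x) (fun i j => ainv i j x) Asym GA) as GS.
  assert (Hs0 : 0 <= s).
  { apply (bsq_nonneg n (fun i j => a i j x) (fun i j => ainv i j x) (fun i => b i x)); auto. }
  assert (HD : 0 < 1 + (k1 + k3) * s + k2 * s ^ 2) by (apply (Hpos x s Hx); unfold s in *; lra).
  assert (Hc : 0 < c) by (unfold c, cfun; apply exp_pos).
  assert (Hcd : derivable_pt_lim (cfun k1 k2 k3) s (c * gq k1 k2 k3 s)).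
  { apply cfun_deriv; auto. intros t Ht. unfold Dq. apply (Hpos x t Hx); auto. }
  set (Dbsq := fun j => sumn n (fun i => sumn n (fun k =>
        (pd (ainv i k) j x * b i x + ainv i k x * pd (b i) j x) * b k x + ainv i k x * b i x * pd (b k) j x))).
  assert (Hbsq : forall j, (j < n)%nat -> derivable_pt_lim (fun t => bsq n ainv b (shift x j t)) 0 (Dbsq j)).
  { intros j Hj. unfold bsq, Dbsq.
    apply (deriv_sumn n (fun i t => sumn n (fun k => ainv i k (shift x j t) * b i (shift x j t) * b k (shift x j t)))).
    intros i Hi.
    apply (deriv_sumn n (fun k t => ainv i k (shift x j t) * b i (shift x j t) * b k (shift x j t))).
    intros k Hk.
    apply deriv_mult'; [apply deriv_mult'| | | ]; try (rewrite shift0; reflexivity).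
    - apply (hp_pd (ainv i k) j x); auto.
    - apply (hp_pd (b i) j x); auto.
    - apply (hp_pd (b k) j x); auto. }
  assert (dId : forall i q l, (i < n)%nat -> (q < n)%nat -> (l < n)%nat ->
     sumn n (fun k => pd (ainv i k) l x * a k q x + ainv i k x * pd (a k q) l x) = 0).
  { intros i q l Hi Hq Hl.
    destruct (shift_near n U x l HU Hx) as [eps [He Hn]].
    apply (deriv_loc_const (fun t => sumn n (fun k => ainv i k (shift x l t) * a k q (shift x l t))) (kdelta i q) eps _ He).
    - intros t Ht. destruct (Ha _ (Hn t Ht)) as [_ [G2 _]]. apply G2; auto.
    - apply (deriv_sumn n (fun k t => ainv i k (shift x l t) * a k q (shift x l t))).
      intros k Hk. apply deriv_mult'; try (rewrite shift0; reflexivity).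
      + apply (hp_pd (ainv i k) l x); auto.
      + apply (hp_pd (a k q) l x); auto. }
  assert (Hcore : forall j, (j < n)%nat -> Dbsq j = 2 * sumn n (fun k => u k * covd n a ainv b k j x)).
  { intros j Hj. unfold Dbsq, u, covd, christoffel.
    exact (core n (fun i j => a i j x) (fun i j => ainv i j x) (fun i => b i x)
      (fun p q r => pd (a p q) r x) (fun p q r => pd (ainv p q) r x) (fun k j => pd (b k) j x)
      Asym GA dId j Hj). }
  assert (HuA : forall j, (j < n)%nat -> sumn n (fun k => u k * a k j x) = b j x).
  { intros j Hj. unfold u.
    transitivity (sumn n (fun k => sumn n (fun l => ainv k l x * b l x * a k j x))).
    { apply sumn_ext; intros k Hk. rewrite <- sumn_scalr. reflexivity. }
    rewrite sumn_swap. transitivity (sumn n (fun l => kdelta l j * b l x)).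
    { apply sumn_ext; intros l Hl. rewrite <- (GA l j) by auto. rewrite <- sumn_scalr.
      apply sumn_ext; intros k Hk. rewrite GS by auto. ring. }
    rewrite (sumn_ext n (fun l => kdelta l j * b l x) (fun l => kdelta j l * b l x)) by (intros; rewrite kdelta_sym; auto).
    apply sumn_delta; auto. }
  assert (HuB : sumn n (fun k => u k * b k x) = s).
  { unfold s, bsq, u. apply sumn_ext; intros k Hk. rewrite <- sumn_scalr. apply sumn_ext; intros; ring. }
  assert (HDb : forall j, (j < n)%nat -> Dbsq j = 4 * tau x * (1 + (k1 + k3) * s + k2 * s ^ 2) * b j x).
  { intros j Hj. rewrite Hcore by auto.
    rewrite (sumn_ext n (fun k => u k * covd n a ainv b k j x)
       (fun k => (2 * tau x * (1 + k1 * s)) * (u k * a k j x) + (2 * tau x * (k2 * s + k3) * b j x) * (u k * b k x))).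
    2:{ intros k Hk. rewrite Hb by auto. fold s. ring. }
    rewrite sumn_add, !sumn_scal, HuA, HuB by auto. ring. }
  assert (Main : forall i j, (i < n)%nat -> (j < n)%nat ->
       covd n a ainv btil i j x = 2 * tau x * (1 + k1 * s) / c * a i j x).
  { intros i j Hi Hj.
    assert (Hpd : pd (btil i) j x = (pd (b i) j x * c - (c * gq k1 k2 k3 s * Dbsq j) * b i x) / c²).
    { apply pd_eq. unfold has_partial, btil.
      apply (deriv_div' (fun t => b i (shift x j t)) (fun t => cfun k1 k2 k3 (bsq n ainv b (shift x j t)))).
      - apply (hp_pd (b i) j x); auto.
      - apply (deriv_comp' (fun t => bsq n ainv b (shift x j t)) (cfun k1 k2 k3) _ _ s); auto.
        rewrite shift0; reflexivity.
      - rewrite shift0; reflexivity.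
      - rewrite shift0; reflexivity.
      - lra. }
    pose proof (Hb x i j Hx Hi Hj) as Hbij. fold s in Hbij. unfold covd in Hbij |- *.
    rewrite Hpd, HDb by auto.
    unfold btil. fold s. fold c.
    rewrite (sumn_ext n (fun k => christoffel n a ainv k i j x * (b k x / c))
      (fun k => / c * (christoffel n a ainv k i j x * b k x))) by (intros; field; lra).
    rewrite sumn_scal.
    assert (Hdbi : pd (b i) j x = sumn n (fun k => christoffel n a ainv k i j x * b k x) +
          2 * tau x * ((1 + k1 * s) * a i j x + (k2 * s + k3) * b i x * b j x)) by lra.
    rewrite Hdbi. unfold gq. unfold Rsqr. field. split; lra. }
  split.
  - exact Main.
  - intros i j Hi Hj. rewrite !Main by auto. rewrite Asym by auto. reflexivity.
Qed.
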